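(* Let $H(\mathbb{C})$ be the space of entire functions with the topology of uniform convergence on compact subsets, and for $a\in\mathbb{C}\setminus\{0\}$ let $T:H(\mathbb{C})\to H(\mathbb{C})$ be the translation operator $T(f)(z)=f(z+a)$. Then $T$ is not supermixing.
   Context: $H(\mathbb{C})$ is metrizable (a Fréchet space). A continuous map $T:X\to X$ is supermixing if for each nonempty open subset $U$ of $X$, $X=\overline{\bigcup_{i=0}^\infty\bigcap_{n=i}^\infty T^n(U)}$. *)

(* Defs.v *)
From Stdlib Require Import Reals.
From Coquelicot Require Import Coquelicot.
Open Scope R_scope.

Definition entire (f : C -> C) : Prop :=
  forall z : C, @ex_derive C_AbsRing C_NormedModule f z.

(* Every compact set lies in a closed disk, so a set U of
   entire functions is open iff around each of its points it contains a
   basic neighbourhood {g | sup_{|z|<=r} |g z - f z| < eps}. *)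
Definition H_open (U : (C -> C) -> Prop) : Prop :=
  forall f, entire f -> U f ->
    exists r eps : R, 0 < eps /\
      forall g, entire g ->
        (forall z : C, Cmod z <= r -> Cmod (Cminus (g z) (f z)) < eps) -> U g.

Definition H_nonempty (U : (C -> C) -> Prop) : Prop :=
  exists f, entire f /\ U f.

Definition H_dense (S : (C -> C) -> Prop) : Prop :=
  forall V, H_open V -> H_nonempty V -> exists g, entire g /\ V g /\ S g.

Definition H_image_iter (T : (C -> C) -> (C -> C)) (n : nat)
  (U : (C -> C) -> Prop) : (C -> C) -> Prop :=
  fun g => exists f, entire f /\ U f /\ Nat.iter n T f = g.

Definition supermixing (T : (C -> C) -> (C -> C)) : Prop :=
  forall U, H_open U -> H_nonempty U ->
    H_dense (fun g => entire g /\ exists i : nat, forall n : nat,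
                (i <= n)%nat -> H_image_iter T n U g).

Definition translation (a : C) (f : C -> C) : C -> C :=
  fun z => f (Cplus z a).

(* Main.v *)
Require Import Defs.
From Stdlib Require Import Reals Lra.
From Coquelicot Require Import Coquelicot.

Lemma shift_back (a w : C) : Cplus (Cminus w a) a = w.
Proof.
  destruct w as [w1 w2], a as [a1 a2]; unfold Cminus, Cplus, Copp; simpl.
  f_equal; ring.
Qed.

Lemma iter_inj (a : C) (n : nat) (f h : C -> C) :
  (forall z, Nat.iter n (translation a) f z = Nat.iter n (translation a) h z) ->
  forall z, f z = h z.
Proof.
  revert f h; induction n as [|n IH]; intros f h H.
  - exact H.
  - apply IH. intro w. rewrite <- (shift_back a w).
    specialize (H (Cminus w a)). rewrite !Nat.iter_succ in H. exact H.
Qed.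

Theorem mainTheorem7 (a : C) (ha : a <> RtoC 0) :
  ~ supermixing (translation a).
Proof.
  intro Hs.
  set (U := fun f : C -> C => Cmod (f (RtoC 0)) < 1 /\ 2 < Cmod (f (Cplus (RtoC 0) a))).
  assert (HUo : H_open U).
  { intros f _ [H1 H2].
    exists (Rmax (Cmod (RtoC 0)) (Cmod (Cplus (RtoC 0) a))).
    exists (Rmin (1 - Cmod (f (RtoC 0))) (Cmod (f (Cplus (RtoC 0) a)) - 2)).
    split. { apply Rmin_glb_lt; lra. }
    intros g _ Hg. split.
    - assert (E := Hg (RtoC 0) (Rmax_l _ _)).
      assert (T := Cmod_triangle (f (RtoC 0)) (Cminus (g (RtoC 0)) (f (RtoC 0)))).
      replace (Cplus (f (RtoC 0)) (Cminus (g (RtoC 0)) (f (RtoC 0)))) with (g (RtoC 0)) in T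
        by (destruct (f (RtoC 0)), (g (RtoC 0)); unfold Cminus, Cplus, Copp; simpl; f_equal; ring).
      assert (M := Rmin_l (1 - Cmod (f (RtoC 0))) (Cmod (f (Cplus (RtoC 0) a)) - 2)).
      lra.
    - set (p := Cplus (RtoC 0) a) in *.
      assert (E := Hg p (Rmax_r _ _)).
      assert (T := Cmod_triangle (g p) (Cminus (f p) (g p))).
      replace (Cplus (g p) (Cminus (f p) (g p))) with (f p) in T
        by (destruct (f p), (g p); unfold Cminus, Cplus, Copp; simpl; f_equal; ring).
      replace (Cminus (f p) (g p)) with (Copp (Cminus (g p) (f p))) in T
        by (destruct (f p), (g p); unfold Cminus, Cplus, Copp; simpl; f_equal; ring).
      rewrite Cmod_opp in T.
      assert (M := Rmin_r (1 - Cmod (f (RtoC 0))) (Cmod (f p) - 2)).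
      lra. }
  assert (HUn : H_nonempty U).
  { set (k := RtoC (3 / Cmod (Cplus (RtoC 0) a))).
    exists (fun z => Cmult z k). split.
    - intro z. exact (ex_derive_scal_l (V := C_NormedModule) (fun x : C => x) z k (ex_derive_id z)).
    - assert (Hp : 0 < Cmod (Cplus (RtoC 0) a)).
      { apply Cmod_gt_0. intro E. apply ha.
        rewrite <- E. destruct a; unfold Cplus, RtoC; simpl; f_equal; ring. }
      split.
      + rewrite Cmod_mult. replace (Cmod (RtoC 0)) with 0 by (rewrite Cmod_0; reflexivity). lra.
      + rewrite Cmod_mult. unfold k. rewrite Cmod_R, Rabs_pos_eq.
        * field_simplify; lra.
        * apply Rlt_le, Rdiv_lt_0_compat; lra. }
  destruct (Hs U HUo HUn (fun _ => True)) as [g [_ [_ [_ [i Hi]]]]].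
  - intros f _ _. exists 1, 1. split; [lra|]. auto.
  - exists (fun _ => RtoC 0). split; [intro z; apply ex_derive_const|exact I].
  - destruct (Hi i (le_n i)) as [f1 [_ [[U1 _] E1]]].
    destruct (Hi (S i) (le_S _ _ (le_n i))) as [f2 [_ [[_ U2] E2]]].
    rewrite Nat.iter_succ_r in E2.
    assert (Eq : forall z, f1 z = translation a f2 z).
    { apply (iter_inj a i). intro z. rewrite E1, E2. reflexivity. }
    rewrite Eq in U1. unfold translation in U1. lra.
Qed.
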